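(* Let $G$ be a closed, geodesically convex subset of an Alexandrov space $(X,d)$ with $(G,d)$ separable, let $K>0$, let $(\Pi,\mathcal A,\mu)$ be a complete probability space, and let $L:\Pi\to F_K(G)$ be a random lower semi-continuous $K$-convex function. Define $f(x):=\int_\Pi L(a,x)\,d\mu(a)$ for $x\in G$. If there exists an integrable function $\alpha_0:\Pi\to(-\infty,+\infty)$ such that $L(a,x)\ge\alpha_0(a)$ holds almost surely, then $f:G\to(-\infty,+\infty]$ is lower semi-continuous and $K$-convex, and $f(x)>-\infty$ for all $x\in G$.
   Context: $F_K(G)$ denotes the set of lower semi-continuous $K$-convex functions $h:G\to(-\infty,\infty]$ not identically $+\infty$, where $h$ is $K$-convex if $h(x\#_ty)\le(1-t)h(x)+th(y)-\frac K2t(1-t)d(x,y)^2$ for all $x,y\in G$, $t\in[0,1]$ and all minimal geodesics $x\#_ty$ (curves with $d(x\#_sy,x\#_ty)=|s-t|d(x,y)$). A map $L:\Pi\to F_K(G)$, $a\mapsto L(a,\cdot)$, is a random lower semi-continuous $K$-convex function if $(a,x)\mapsto L(a,x)$ is $\mathcal A\otimes\mathcal B(G)$-measurable, $\mathcal B(G)$ being the Borel $\sigma$-algebra of $(G,d)$. *)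

(* Defs.v *)
From HB Require Import structures.
From mathcomp Require Import all_boot all_order all_algebra.
From mathcomp Require Import all_classical all_reals all_analysis.
From mathcomp Require Import measurable_realfun.
Set Implicit Arguments.
Unset Strict Implicit.
Unset Printing Implicit Defensive.
Import Order.TTheory GRing.Theory Num.Theory.
Local Open Scope classical_set_scope.
Local Open Scope ring_scope.

Section Defs.
Variable R : realType.
Variable X : Type.
Variable d : X -> X -> R.

Definition is_metric :=
  [/\ (forall x y, 0 <= d x y),
      (forall x y, d x y = 0 <-> x = y),
      (forall x y, d x y = d y x) &
      (forall x y z, d x z <= d x y + d y z)].

Definition cauchy_seq (u : nat -> X) :=
  forall e : R, 0 < e -> exists N, forall n m, (N <= n)%N -> (N <= m)%N ->
    d (u n) (u m) < e.

Definition seq_converges_to (u : nat -> X) (x : X) :=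
  forall e : R, 0 < e -> exists N, forall n, (N <= n)%N -> d (u n) x < e.

Definition metric_complete :=
  forall u : nat -> X, cauchy_seq u -> exists x, seq_converges_to u x.

Definition d_open (U : set X) :=
  forall x, U x -> exists2 e : R, 0 < e & forall y, d x y < e -> U y.

Definition d_closed (C : set X) := d_open (~` C).

Definition d_separable (G : set X) :=
  exists D : set X, [/\ countable D, D `<=` G &
    forall x, G x -> forall e : R, 0 < e -> exists2 y, D y & d x y < e].

(** minimal geodesic from x to y, parametrised on [0,1]:
    d(g s, g t) = |s - t| d(x,y) (this is the curve [t |-> x #_t y]) *)
Definition min_geodesic (x y : X) (g : R -> X) :=
  [/\ g 0 = x, g 1 = y &
      forall s t, 0 <= s <= 1 -> 0 <= t <= 1 -> d (g s) (g t) = `|s - t| * d x y].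

Definition geodesic_space :=
  forall x y, exists g, min_geodesic x y g.

Definition geod_convex (G : set X) :=
  forall x y, G x -> G y ->
    (exists g, min_geodesic x y g) /\
    (forall g, min_geodesic x y g -> forall t, 0 <= t <= 1 -> G (g t)).

(** For a geodesic triangle x, y, z, with m = g t on a minimal geodesic g from y
    to z, the model distance mbar from the vertex to the point at fraction t on
    the opposite side of the comparison triangle in the model plane M_kappa is
    characterised (Stewart's theorem) by
      kappa = 0 : mbar^2 = (1-t) a^2 + t b^2 - t(1-t) D^2
      kappa > 0 : sin(sD) cos(s mbar) = sin((1-t)sD) cos(sa) + sin(tsD) cos(sb)
      kappa < 0 : sinh(sD) cosh(s mbar) = sinh((1-t)sD) cosh(sa) + sinh(tsD) cosh(sb)
    with a = d(x,y), b = d(x,z), D = d(y,z), s = sqrt |kappa|.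
    Since cos is decreasing on [0,pi] and cosh increasing on [0,oo),
    d(x,m) >= mbar  (resp. <=) is expressed as below; for kappa > 0 only
    triangles with perimeter < 2 pi / sqrt kappa are considered. *)
Definition cosh (r : R) : R := (expR r + expR (- r)) / 2.
Definition sinh (r : R) : R := (expR r - expR (- r)) / 2.

(* [side] = true : curvature >= kappa ; [side] = false : curvature <= kappa *)
Definition comparison (side : bool) (kappa : R) (x y z : X) (t : R) (m : X) :=
  let a := d x y in let b := d x z in let D := d y z in let dm := d x m in
  let s := Num.sqrt `|kappa| in
  if kappa == 0 then
    (if side then (1 - t) * a ^+ 2 + t * b ^+ 2 - t * (1 - t) * D ^+ 2 <= dm ^+ 2
     else dm ^+ 2 <= (1 - t) * a ^+ 2 + t * b ^+ 2 - t * (1 - t) * D ^+ 2)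
  else if 0 < kappa then
    (let lhs := sin (s * D) * cos (s * dm) in
     let rhs := sin ((1 - t) * s * D) * cos (s * a) + sin (t * s * D) * cos (s * b) in
     if side then lhs <= rhs else rhs <= lhs)
  else
    (let lhs := sinh (s * D) * cosh (s * dm) in
     let rhs := sinh ((1 - t) * s * D) * cosh (s * a) + sinh (t * s * D) * cosh (s * b) in
     if side then rhs <= lhs else lhs <= rhs).

Definition triangle_comparison (side : bool) (kappa : R) :=
  forall x y z (g : R -> X), min_geodesic y z g ->
    (0 < kappa -> d x y + d y z + d z x < 2 * pi / Num.sqrt kappa) ->
    forall t, 0 <= t <= 1 -> comparison side kappa x y z t (g t).

Definition geodesic_below (kappa : R) :=
  forall x y, (0 < kappa -> d x y < pi / Num.sqrt kappa) ->
    exists g, min_geodesic x y g.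

Definition alexandrov_lower (kappa : R) :=
  [/\ is_metric, metric_complete, geodesic_space & triangle_comparison true kappa].

Definition alexandrov_upper (kappa : R) :=
  [/\ is_metric, metric_complete, geodesic_below kappa &
      triangle_comparison false kappa].

Definition alexandrov_space :=
  exists kappa : R, alexandrov_lower kappa \/ alexandrov_upper kappa.

Local Open Scope ereal_scope.

Definition lsc_on (G : set X) (h : X -> \bar R) :=
  forall x, G x -> forall r : R, r%:E < h x ->
    exists2 e : R, (0 < e)%R & forall y, G y -> (d x y < e)%R -> r%:E < h y.

Definition K_convex_on (K : R) (G : set X) (h : X -> \bar R) :=
  forall x y, G x -> G y -> forall g, min_geodesic x y g ->
    forall t : R, (0 <= t <= 1)%R ->
      h (g t) <= (1 - t)%:E * h x + t%:E * h y
                 - (K / 2 * t * (1 - t) * d x y ^+ 2)%R%:E.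

Definition in_FK (K : R) (G : set X) (h : X -> \bar R) :=
  [/\ forall x, G x -> h x != -oo,
      exists2 x, G x & h x != +oo,
      lsc_on G h &
      K_convex_on K G h].

(** Borel sigma-algebra of (G,d) tensored with A, as a sigma-algebra on the
    subset [setT `*` G] of [Pi * X] *)
Definition prod_borel_sigma {dP} (P : measurableType dP) (G : set X) :
    set (set (P * X)) :=
  <<s setT `*` G, [set A `*` (G `&` U) | A in measurable &
                   U in d_open] >>.

Definition random_FK {dP} (P : measurableType dP) (K : R) (G : set X)
    (L : P -> X -> \bar R) :=
  (forall a, in_FK K G (L a)) /\
  (forall B : set (\bar R), measurable B ->
     @prod_borel_sigma _ P G ((setT `*` G) `&` [set p | B (L p.1 p.2)])).

End Defs.

(* Main.v *)
Require Import Defs.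
From HB Require Import structures.
From mathcomp Require Import all_boot all_order all_algebra.
From mathcomp Require Import all_classical all_reals all_analysis.
From mathcomp Require Import measurable_realfun.
Import Order.TTheory GRing.Theory Num.Theory.
Local Open Scope classical_set_scope.
Local Open Scope ring_scope.
Local Open Scope ereal_scope.
From mathcomp Require Import ring lra.

Lemma section_meas (R : realType) (X : Type) (d : X -> X -> R) (G : set X)
  (dP : measure_display) (Pi : measurableType dP) (x : X) :
  G x -> forall S, @prod_borel_sigma _ _ d _ Pi G S -> measurable [set a | S (a, x)].
Proof.
move=> Gx S hS.
apply: (@smallest_sub _ _ _ [set S | measurable [set a | S (a, x)]] _ _ S hS); last first.
  move=> _ [A mA [U oU <-]] /=.
  have [GUx|nGUx] := pselect ((G `&` U) x).
    by rewrite (_ : [set a | _] = A) //; apply/seteqP; split => a /=; [case|].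
  rewrite (_ : [set a | _] = set0) //; apply/seteqP; split => a //=; by case.
split => /=.
- by rewrite (_ : [set a | _] = set0).
- move=> A mA; rewrite (_ : [set a | _] = ~` [set a | A (a, x)]).
    exact: measurableC.
  by apply/seteqP; split => a /=; [case=> _ ?|move=> nA; split].
- move=> F mF; rewrite (_ : [set a | _] = \bigcup_k [set a | F k (a, x)]).
    exact: bigcupT_measurable.
  by apply/seteqP; split => a /=.
Qed.

Lemma L_meas (R : realType) (X : Type) (d : X -> X -> R) (G : set X) (K : R)
  (dP : measure_display) (Pi : measurableType dP) (L : Pi -> X -> \bar R) x :
  random_FK d K G L -> G x -> measurable_fun setT (fun a => L a x).
Proof.
move=> [_ hL] Gx _ B mB; rewrite setTI.
have := @section_meas _ _ d G _ Pi x Gx _ (hL B mB).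
by rewrite (_ : [set a | _] = (fun a => L a x) @^-1` B) //; apply/seteqP; split => a /=; [case|].
Qed.

Lemma intDge0 dT (T : measurableType dT) (R : realType) (mu : {measure set T -> \bar R})
  (h : T -> \bar R) (g : T -> R) :
  measurable_fun setT h -> (forall x, 0 <= h x) -> mu.-integrable setT (EFin \o g) ->
  \int[mu]_x (h x + (g x)%:E) = \int[mu]_x h x + \int[mu]_x (g x)%:E.
Proof.
move=> mh h0 ig.
have mg : measurable_fun setT (EFin \o g) := measurable_int _ ig.
have gfin : \int[mu]_x (g x)%:E \is a fin_num := integrable_fin_num measurableT ig.
have [hfin|] := ltP (\int[mu]_x h x) +oo.
  have ih : mu.-integrable setT h.
    apply/integrableP; split => //.
    by under eq_integral do rewrite gee0_abs//.
  exact: (integralD measurableT ih ig).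
rewrite leye_eq => /eqP hinf.
rewrite hinf addye; last by case/fin_numP: gfin.
set F := fun x => h x + (g x)%:E.
have mF : measurable_fun setT F by apply: emeasurable_funD.
have gnfin : \int[mu]_x (EFin \o g)^\- x \is a fin_num :=
  integrable_neg_fin_num measurableT ig.
have negfin : \int[mu]_x F^\- x \is a fin_num.
  rewrite ge0_fin_numE; last by apply: integral_ge0 => x _.
  apply: le_lt_trans (integral_funeneg_lt_pinfty measurableT ig).
  apply: ge0_le_integral => //.
  - exact: measurable_funeneg.
  - exact: measurable_funeneg.
  move=> x _; rewrite !funenegE ge_max; apply/andP; split; rewrite le_max ?lexx ?orbT //.
  by apply/orP; left; rewrite leeN2 /F leeDr.
have posinf : \int[mu]_x F^\+ x = +oo.
  have : \int[mu]_x h x <= \int[mu]_x (F^\+ x + (EFin \o g)^\- x).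
    apply: (ge0_le_integral mu measurableT (fun x _ => h0 x) mh).
    - by apply: emeasurable_funD; [exact: measurable_funepos|exact: measurable_funeneg].
    move=> x _; rewrite -[h x](@addeK _ (g x)%:E) //.
    apply: leeD; first by rewrite funeposE le_max lexx.
    by rewrite funenegE le_max lexx.
  rewrite (ge0_integralD mu measurableT) //; first last.
  - exact: measurable_funeneg.
  - exact: measurable_funepos.
  rewrite hinf -(fineK gnfin).
  by case: (\int[mu]_x F^\+ x).
rewrite integralE posinf -(fineK negfin).
by [].
Qed.

Lemma maxe_sub (R : realType) (a : R) (L : \bar R) : a%:E <= L ->
  maxe (L - a%:E) 0 = L - a%:E.
Proof. by move=> aL; apply/max_idPl; rewrite suber_ge0. Qed.

Lemma pw (R : realType) (a c t : R) (Lx Ly Lz : \bar R) :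
  (0 < t < 1)%R -> (0 <= c)%R -> a%:E <= Lx -> a%:E <= Ly -> a%:E <= Lz ->
  Lz <= (1-t)%:E * Lx + t%:E * Ly - c%:E ->
  maxe (Lz - a%:E) 0 + c%:E <=
    (1-t)%:E * maxe (Lx - a%:E) 0 + t%:E * maxe (Ly - a%:E) 0.
Proof.
move=> /andP[t0 t1] c0 ax ay az.
rewrite !maxe_sub //.
have t1' : (0 < 1 - t)%R by rewrite subr_gt0.
move: ax ay az.
case: Lx => [x| |] //; case: Ly => [y| |] //; case: Lz => [z| |] //=;
  rewrite ?gt0_muley ?lte_fin // /= ?leey //.
rewrite !lee_fin => ax ay az.
rewrite -?EFinD -?EFinM -?EFinD -?EFinM -?EFinD ?lee_fin => H.
nra.
Qed.

Lemma fin_ineq (R : realType) (c0 c t : R) (Ix Iy Iz : \bar R) :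
  (0 < t < 1)%R -> 0 <= Ix -> 0 <= Iy -> 0 <= Iz ->
  Iz + c%:E <= (1-t)%:E * Ix + t%:E * Iy ->
  Iz + c0%:E <= (1-t)%:E * (Ix + c0%:E) + t%:E * (Iy + c0%:E) - c%:E.
Proof.
move=> /andP[t0 t1].
have t1' : (0 < 1 - t)%R by rewrite subr_gt0.
case: Ix => [x| |] //; case: Iy => [y| |] //; case: Iz => [z| |] //=;
  rewrite ?gt0_muley ?lte_fin // /= ?leey //.
rewrite !lee_fin => ax ay az.
rewrite -?EFinD -?EFinM -?EFinD -?EFinM -?EFinD ?lee_fin => H.
nra.
Qed.

Lemma le_from_lt (R : realType) (u w : \bar R) :
  (forall s : R, s%:E < u -> s%:E <= w) -> u <= w.
Proof.
case: w => [r| |] H; last first.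
- case: u H => [ur| |] H //.
  + by have := H (ur - 1)%R; rewrite lte_fin ltrBlDr ltrDl ltr01 => /(_ isT).
  + by have := H 0%R (ltry _).
- by rewrite leey.
case: u H => [ur| |] H //.
- rewrite lee_fin leNgt; apply/negP => rur.
  have := H ((r + ur) / 2)%R; rewrite !lte_fin !lee_fin => K.
  have : ((r + ur) / 2 < ur)%R by lra.
  by move/K; lra.
- by have := H (r + 1)%R (ltry _); rewrite lee_fin => K; exfalso; lra.
- by rewrite leNye.
Qed.

Lemma liminf_le (R : realType) (v : nat -> \bar R) (M : \bar R) :
  (forall n, v n <= M) -> limn_einf v <= M.
Proof.
move=> vM; rewrite limn_einf_lim; apply: lime_le; first exact: is_cvg_einfs.
apply: nearW => n; apply: le_trans (vM n).
by apply: ereal_inf_lbound; exists n => /=.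
Qed.

Lemma liminf_ge (R : realType) (v : nat -> \bar R) (u : \bar R) :
  (forall s : R, s%:E < u -> exists N, forall n, (N <= n)%N -> s%:E < v n) ->
  u <= limn_einf v.
Proof.
move=> H; apply: le_from_lt => s /H [N HN].
rewrite limn_einf_lim; apply: lime_ge; first exact: is_cvg_einfs.
exists N => // n /= Nn; apply: le_ereal_inf_tmp => _ [k /= nk <-].
by apply: ltW; apply: HN; apply: leq_trans nk.
Qed.

Theorem lemma6p2 (R : realType) (X : Type) (d : X -> X -> R)
  (G : set X) (K : R)
  (dP : measure_display) (Pi : measurableType dP) (mu : probability Pi R)
  (L : Pi -> X -> \bar R) (alpha0 : Pi -> R) :
  alexandrov_space d ->
  d_closed d G -> geod_convex d G -> d_separable d G ->
  (0 < K)%R ->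
  measure_is_complete mu ->
  random_FK d K G L ->
  mu.-integrable setT (EFin \o alpha0) ->
  (forall x, G x -> {ae mu, forall a, (alpha0 a)%:E <= L a x}) ->
  let f := fun x => \int[mu]_a L a x in
  [/\ lsc_on d G f, K_convex_on d K G f & forall x, G x -> f x != -oo].
Proof.
move=> _ _ Gconv _ K0 _ rFK ia0 aeL f.
have mL : forall x, G x -> measurable_fun setT (fun a => L a x) :=
  fun x Gx => @L_meas R X d G K dP Pi L x rFK Gx.
have mA : measurable_fun setT (EFin \o alpha0) := measurable_int _ ia0.
pose h x a := maxe (L a x - (alpha0 a)%:E) 0.
have h0 : forall x a, 0 <= h x a by move=> x a; rewrite /h le_max lexx orbT.
have mh : forall x, G x -> measurable_fun setT (h x).
  move=> x Gx; apply: measurable_maxe; last exact: measurable_cst.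
  by apply: emeasurable_funB => //; exact: mL.
pose c0 := \int[mu]_a (alpha0 a)%:E.
have c0fin : c0 \is a fin_num := integrable_fin_num measurableT ia0.
pose cr := fine c0.
have E : forall x, G x -> f x = \int[mu]_a h x a + cr%:E.
  move=> x Gx; rewrite /cr fineK // /c0.
  rewrite -(@intDge0 _ _ _ mu (h x) alpha0 (mh x Gx) (h0 x) ia0).
  rewrite /f; apply: ae_eq_integral => //.
  - exact: mL.
  - by apply: emeasurable_funD => //; exact: mh.
  - apply: filterS (aeL x Gx) => a la _.
    by rewrite /h maxe_sub // subeK.
have I0 : forall x, 0 <= \int[mu]_a h x a.
  by move=> x; apply: integral_ge0 => a _; exact: h0.
split.
- move=> x Gx r rfx; apply: contrapT => Hno.
  have Hy : forall n : nat, exists y, G y /\ (d x y < n.+1%:R^-1)%R /\ f y <= r%:E.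
    move=> n; apply: contrapT => Hn; apply: Hno; exists (n.+1%:R^-1)%R => //.
    move=> y Gy dy; rewrite ltNge; apply/negP => fyr; apply: Hn; exists y; by [].
  have [ys Hys] := choice Hy.
  have Fat := @fatou _ _ _ mu setT measurableT (fun n => h (ys n))
    (fun n => mh _ (Hys n).1) (fun n a _ => h0 _ a).
  have mlim : measurable_fun setT (fun a => limn_einf (fun n => h (ys n) a)).
    have -> : (fun a => limn_einf (fun n => h (ys n) a)) =
        -%E \o (fun a => limn_esup (fun n => - h (ys n) a)) by [].
    apply: measurableT_comp => //; apply: measurable_fun_limn_esup => n.
    by apply: measurableT_comp => //; exact: mh (Hys n).1.
  have le1 : \int[mu]_a h x a <= \int[mu]_a limn_einf (fun n => h (ys n) a).
    apply: (ge0_le_integral mu measurableT (fun a _ => h0 x a) (mh x Gx) mlim).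
    move=> a _; apply: liminf_ge => s.
    rewrite {1}/h lt_max => /orP[sL|s0]; last first.
      by exists 0%N => n _; apply: lt_le_trans s0 (h0 _ _).
    move: sL; rewrite lteBrDr // -EFinD => sL.
    have [_ _ lscL _] := rFK.1 a.
    have [e e0 He] := lscL x Gx _ sL.
    move: (truncnS_gt (e^-1)); set N := (X in (_ < X.+1%:R)%R) => HN.
    exists N => n Nn.
    have [Gyn [dyn _]] := Hys n.
    have dyne : (d x (ys n) < e)%R.
      apply: lt_trans dyn _.
      have Npos : (0 < N.+1%:R :> R)%R by rewrite ltr0n.
      apply: (@le_lt_trans _ _ (N.+1%:R^-1)%R).
        by rewrite lef_pV2 ?posrE ?ltr0n // ler_nat ltnS.
      by rewrite invf_plt ?posrE.
    have := He _ Gyn dyne.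
    rewrite EFinD -lteBrDr // => H1; apply: lt_le_trans H1 _.
    by rewrite /h le_max lexx.
  have le2 : limn_einf (fun n => \int[mu]_a h (ys n) a) <= (r - cr)%:E.
    apply: liminf_le => n.
    have [Gyn [_ fyn]] := Hys n.
    by rewrite EFinB leeBrDr // -E.
  have : f x <= r%:E.
    rewrite E // -leeBrDr // -EFinB.
    exact: le_trans le1 (le_trans Fat le2).
  by rewrite leNgt rfx.
- move=> x y Gx Gy g gg t /andP[t0' t1'].
  have [->|tn0] := eqVneq t 0%R.
    case: gg => -> _ _.
    by rewrite subr0 mul1e mul0e adde0 mulr0 mul0r mul0r oppe0 adde0.
  have [->|tn1] := eqVneq t 1%R.
    case: gg => _ -> _.
    by rewrite subrr mul1e mul0e add0e !mulr0 mul0r oppe0 adde0.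
  have t01 : (0 < t < 1)%R by rewrite !lt_neqAle eq_sym tn0 tn1 t0' t1'.
  have Gz : G (g t) := (Gconv x y Gx Gy).2 g gg t (andb_true_intro (conj t0' t1')).
  set c := (K / 2 * t * (1 - t) * d x y ^+ 2)%R.
  have cge0 : (0 <= c)%R.
    rewrite /c; apply: mulr_ge0; last exact: sqr_ge0.
    apply: mulr_ge0; last by rewrite subr_ge0.
    apply: mulr_ge0 => //; apply: divr_ge0 => //; exact: ltW.
  rewrite (E _ Gz) (E _ Gx) (E _ Gy).
  apply: fin_ineq => //.
  have key : \int[mu]_a (h (g t) a + c%:E) <=
      \int[mu]_a ((1 - t)%:E * h x a + t%:E * h y a).
    apply: ae_ge0_le_integral => //.
    - by move=> a _; rewrite adde_ge0.
    - by apply: emeasurable_funD => //; exact: mh.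
    - by move=> a _; rewrite adde_ge0 // mule_ge0 // lee_fin ?subr_ge0.
    - apply: emeasurable_funD.
      + by apply: emeasurable_funM => //; exact: mh.
      + by apply: emeasurable_funM => //; exact: mh.
    have aeyz : {ae mu, forall a, (alpha0 a)%:E <= L a y /\ (alpha0 a)%:E <= L a (g t)}.
      by apply: (filterS2 _ _ (aeL y Gy) (aeL (g t) Gz)) => a ly lz.
    apply: (filterS2 _ _ (aeL x Gx) aeyz) => a lx [ly lz] _.
    rewrite /h; apply: pw => //.
    have [_ _ _ cvx] := rFK.1 a.
    exact: (cvx x y Gx Gy g gg t (andb_true_intro (conj t0' t1'))).
  have c0E : 0 <= c%:E by rewrite lee_fin.
  have t0E : 0 <= t%:E by rewrite lee_fin.
  have t1E : 0 <= (1 - t)%:E by rewrite lee_fin subr_ge0.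
  move: key.
  rewrite (ge0_integralD mu measurableT (fun a _ => h0 _ a) (mh _ Gz)
    (fun _ _ => c0E) (measurable_cst _)).
  rewrite (ge0_integralD mu measurableT (fun a _ => mule_ge0 t1E (h0 x a))
    (emeasurable_funM (measurable_cst _) (mh _ Gx))
    (fun a _ => mule_ge0 t0E (h0 y a))
    (emeasurable_funM (measurable_cst _) (mh _ Gy))).
  rewrite (@ge0_integralZl _ _ _ mu setT measurableT (h x) (mh _ Gx) _ (fun a _ => h0 x a) t1E).
  rewrite (@ge0_integralZl _ _ _ mu setT measurableT (h y) (mh _ Gy) _ (fun a _ => h0 y a) t0E).
  have -> : \int[mu]_a c%:E = c%:E.
    rewrite (integral_cst mu measurableT c%:E).
    by transitivity (c%:E * 1); [congr (_ * _); exact: probability_setT|exact: mule1].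
  by [].
- move=> x Gx; rewrite (E x Gx).
  by move: (I0 x); case: (\int[mu]_a h x a).
Qed.
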